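(* For every $n\ge 1$ let $H_n$ and $P_n$ denote the numbers of tilings of the regions $H_n$ and $P_n$ (defined in the context). Then $H_1=1$, $H_2=3$, $P_1=1$, $P_2=2$, and for all $n\ge 2$ $$H_n=H_{n-1}+2P_{n-1},\qquad P_n=H_{n-1}+P_{n-1}.$$ Consequently, for all $n\ge 3$, $H_n=2H_{n-1}+H_{n-2}$ and $P_n=2P_{n-1}+P_{n-2}$. In particular $(P_n)_{n\ge1}=(1,2,5,12,29,70,\dots)$ is the sequence of Pell numbers and $(H_n)_{n\ge1}=(1,3,7,17,41,99,\dots)$, i.e. for all $n\ge1$ $$P_n=\frac{(1+\sqrt2)^n-(1-\sqrt2)^n}{2\sqrt2},\qquad H_n=\frac{(1+\sqrt2)^n+(1-\sqrt2)^n}{2}.$$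
   Context: Let $s=\sqrt3/2$. Consider the standard triangular lattice in the plane whose vertices are the points $(a+b/2,\,bs)$ with $a,b\in\mathbb Z$ and whose edges are the unit segments joining lattice points in the directions $0^\circ,60^\circ,120^\circ$; it divides the plane into unit equilateral triangles called cells. A small tile is a single cell; a large tile is an equilateral triangle of side $2$ whose vertices are lattice points (so it is a union of $4$ cells; it may point up or down). For a region $R$ that is a finite union of cells, a tiling of $R$ is a finite set of small and large tiles, each contained in $R$, with pairwise disjoint interiors and union equal to $R$. For $n\ge1$, the region $H_n$ is the union of the trapezoid with vertices $(0,0),(n,0),(n-\tfrac12,s),(\tfrac12,s)$ and the trapezoid with vertices $(\tfrac12,s),(n-\tfrac12,s),(n,2s),(0,2s)$ (for $n=1$ these degenerate to two unit triangles meeting at a single point); $H_n$ consists of $4n-2$ cells. The region $P_n$ is $H_n$ with the cell with vertices $(n-1,0),(n,0),(n-\tfrac12,s)$ removed ($4n-3$ cells). By abuse of notation, $H_n$ and $P_n$ also denote the number of tilings of these regions. *)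

(* Defs.v *)
From HB Require Import structures.
From mathcomp Require Import all_boot all_order all_algebra.
From mathcomp Require Import finmap.
From mathcomp Require Import boolp.
Set Implicit Arguments. Unset Strict Implicit. Unset Printing Implicit Defensive.
Import Order.TTheory GRing.Theory Num.Theory.
Open Scope fset_scope.

(* Lattice point (a,b) is the point (a + b/2, b*sqrt3/2).
   A cell is encoded by (a, b, up):
   - up = true  : the upward cell with vertices (a,b),(a+1,b),(a,b+1);
   - up = false : the downward cell with vertices (a+1,b),(a,b+1),(a+1,b+1). *)
Definition cell := (int * int * bool)%type.

(* Tiles: a small tile (one cell), or a large (side 2) triangle with lattice
   vertices, pointing up (vertices (a,b),(a+2,b),(a,b+2)) or down
   (vertices (a+2,b),(a,b+2),(a+2,b+2)). *)
Inductive tile :=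
| Small of cell
| LargeUp of int & int
| LargeDown of int & int.

Definition tile_cells (t : tile) : seq cell :=
  match t with
  | Small c => [:: c]
  | LargeUp a b => [:: (a, b, true); (a + 1, b, true); (a, b + 1, true); (a, b, false)]
  | LargeDown a b => [:: (a + 1, b, false); (a, b + 1, false);
                        (a + 1, b + 1, false); (a + 1, b + 1, true)]
  end%R.

Definition is_tile_in (R : {fset cell}) (X : {set R}) : Prop :=
  exists t : tile,
    (forall c, c \in tile_cells t -> c \in R) /\
    (forall x : R, (x \in X) = (val x \in tile_cells t)).

(* A tiling of R: a set of tiles contained in R, pairwise non-overlapping
   (disjoint cell sets = disjoint interiors) whose union is R. *)
Definition is_tiling (R : {fset cell}) (T : {set {set R}}) : Prop :=
  partition T [set: R] /\ (forall X, X \in T -> is_tile_in X).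

Definition ntilings (R : {fset cell}) : nat :=
  #|[set T : {set {set R}} | `[< is_tiling T >]]|.

Definition Hcells (n : nat) : seq cell :=
  [seq ((i%:Z)%R, 0%R, true) | i <- iota 0 n] ++
  [seq ((i%:Z)%R, 0%R, false) | i <- iota 0 n.-1] ++
  [seq ((i%:Z)%R, 1%R, true) | i <- iota 0 n.-1] ++
  [seq ((i%:Z - 1)%R, 1%R, false) | i <- iota 0 n].

Definition Hreg (n : nat) : {fset cell} := [fset c | c in Hcells n].

(* P_n: H_n minus the cell with vertices (n-1,0),(n,0),(n-1/2,s),
   i.e. the up cell (a,b) = (n-1,0). *)
Definition Preg (n : nat) : {fset cell} :=
  Hreg n `\ (((n.-1)%:Z)%R, 0%R, true).

Definition Hn (n : nat) : nat := ntilings (Hreg n).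
Definition Pn (n : nat) : nat := ntilings (Preg n).

(* Main.v *)
Require Import Defs.
From HB Require Import structures.
From mathcomp Require Import all_boot all_order all_algebra.
Import Order.TTheory GRing.Theory Num.Theory.
From mathcomp Require Import finmap boolp zify ring lra.
Set Implicit Arguments. Unset Strict Implicit. Unset Printing Implicit Defensive.
Local Open Scope fset_scope.
Local Open Scope ring_scope.


Definition tshape (t : tile) : {fset cell} := [fset c in tile_cells t].
Lemma mem_tshape t c : (c \in tshape t) = (c \in tile_cells t).
Proof. by rewrite inE. Qed.
Definition head_cell (t : tile) : cell :=
  match t with Small c => c | LargeUp a b => (a, b, true) | LargeDown a b => (a + 1, b, false) end.
Lemma head_in t : head_cell t \in tshape t.
Proof. by rewrite mem_tshape; case: t => /= *; rewrite !inE eqxx. Qed.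
Definition cand (c : cell) : seq tile :=
  [:: Small c; LargeUp c.1.1 c.1.2; LargeDown (c.1.1 - 1) c.1.2].
Lemma cand_head t : tshape t \in [seq tshape t' | t' <- cand (head_cell t)].
Proof. case: t => [c|a b|a b] /=; rewrite !inE ?eqxx ?orbT //.
by rewrite addrK eqxx !orbT. Qed.

Definition shapes (R : {fset cell}) : {fset {fset cell}} :=
  [fset X in flatten [seq [seq tshape t | t <- cand c] | c <- enum_fset R] | X `<=` R].

Lemma shapesP R X : reflect (exists t, tshape t `<=` R /\ X = tshape t) (X \in shapes R).
Proof.
rewrite inE; apply: (iffP andP) => /=.
  move=> [/flatten_mapP[c cR]].
  case: c cR => [[a b] u] cR; rewrite !inE => /or3P[] /eqP -> sub; (eexists; split; last reflexivity; exact: sub).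
move=> [t [sub ->]]; rewrite sub; split=> //.
apply/flatten_mapP; exists (head_cell t); last exact: cand_head.
by apply: (fsubsetP sub); exact: head_in.
Qed.

Lemma tshape_neq0 t : tshape t != fset0.
Proof. by apply/eqP => E; have := head_in t; rewrite E inE. Qed.

Lemma shapes_sub R X : X \in shapes R -> X `<=` R.
Proof. by case/shapesP => t [? ->]. Qed.

Lemma shapes_neq0 R X : X \in shapes R -> X != fset0.
Proof. by case/shapesP => t [? ->]; exact: tshape_neq0. Qed.

Definition goodP (R : {fset cell}) (S : {fset {fset cell}}) : Prop :=
  (forall c, c \in R -> exists2 X, X \in S & c \in X) /\
  (forall c X Y, X \in S -> Y \in S -> c \in X -> c \in Y -> X = Y).

Definition G (R : {fset cell}) : {fset {fset {fset cell}}} :=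
  [fset S in fpowerset (shapes R) | `[< goodP R S >]].

Lemma GP R S : (S \in G R) = (S `<=` shapes R) && `[< goodP R S >].
Proof. by rewrite !inE fpowersetE. Qed.

Section Bridge.
Variable R : {fset cell}.

Definition fv (X : {set R}) : {fset cell} := [fset val x | x in X].

Lemma mem_fv X (x : R) : (val x \in fv X) = (x \in X).
Proof.
apply/imfsetP/idP => [[y yX /val_inj ->] //|xX]; by exists x.
Qed.

Lemma fv_sub X : fv X `<=` R.
Proof. by apply/fsubsetP => c /imfsetP[x _ ->]; exact: valP. Qed.

Lemma fv_inj : injective fv.
Proof. by move=> X Y E; apply/setP => x; rewrite -!mem_fv E. Qed.

Definition psi (Y : {fset cell}) : {set R} := [set x : R | val x \in Y].

Lemma fv_psi Y : Y `<=` R -> fv (psi Y) = Y.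
Proof.
move=> sub; apply/fsetP => c; apply/imfsetP/idP => [[x]|cY].
  by rewrite inE => ? ->.
by exists [` fsubsetP sub c cY]; rewrite ?inE.
Qed.

Definition fvT (T : {set {set R}}) : {fset {fset cell}} := [fset fv X | X in T].

Lemma mem_fvT T X : (fv X \in fvT T) = (X \in T).
Proof.
apply/imfsetP/idP => [[Y YT /fv_inj ->] //|XT]; by exists X.
Qed.

Lemma fvT_inj : injective fvT.
Proof. by move=> T1 T2 E; apply/setP => X; rewrite -!mem_fvT E. Qed.

End Bridge.

Lemma fvT_tiling (R : {fset cell}) (T : {set {set R}}) : is_tiling T -> fvT T \in G R.
Proof.
move=> [/and3P[/eqP covT trivT n0T] tileT]; rewrite GP; apply/andP; split.
  apply/fsubsetP => Y /imfsetP[X XT ->]; have [t [tR tX]] := tileT X XT.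
  apply/shapesP; exists t; split.
    by apply/fsubsetP => c; rewrite mem_tshape; exact: tR.
  apply/fsetP => c; rewrite mem_tshape; apply/idP/idP.
    by case/imfsetP => x xX ->; rewrite -tX.
  move=> ct; have cR := tR c ct.
  by rewrite -[c]/(val [` cR]) mem_fv tX.
apply/asboolP; split.
  move=> c cR; have : [` cR] \in cover T by rewrite covT inE.
  case/bigcupP => X XT xX; exists (fv X); first by rewrite mem_fvT.
  by rewrite -[c]/(val [` cR]) mem_fv.
move=> c Y1 Y2 /imfsetP[X1 X1T ->] /imfsetP[X2 X2T ->].
case/imfsetP => x1 x1X ->; case/imfsetP => x2 x2X /val_inj E.
case: (X1 =P X2) => [-> //|ne].
have /trivIsetP/(_ X1 X2 X1T X2T (introN eqP ne)) dis := trivT.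
by move: (disjointFr dis x1X); rewrite E x2X.
Qed.

Lemma G_tiling (R : {fset cell}) S : S \in G R ->
  exists2 T : {set {set R}}, is_tiling T & fvT T = S.
Proof.
rewrite GP => /andP[/fsubsetP Ssh /asboolP[covS disS]].
have Ssub Y : Y \in S -> Y `<=` R by move/Ssh/shapes_sub.
exists [set X : {set R} | fv X \in S]; last first.
  apply/fsetP => Y; apply/imfsetP/idP => [[X]|YS].
    by rewrite inE => ? ->.
  by exists (psi R Y); rewrite ?inE fv_psi ?Ssub.
split.
  apply/and3P; split.
  - apply/eqP/setP => x; rewrite inE; apply/bigcupP.
    have [Y YS xY] := covS _ (valP x).
    by exists (psi R Y); rewrite !inE ?fv_psi ?Ssub.
  - apply/trivIsetP => X1 X2; rewrite !inE => X1S X2S ne.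
    apply/pred0P => x /=; apply/negbTE/negP => /andP[x1 x2].
    move: ne; rewrite -(inj_eq (@fv_inj R)) (disS (val x) _ _ X1S X2S) ?eqxx //.
      by rewrite mem_fv.
    by rewrite mem_fv.
  - rewrite inE; apply/negP => S0.
    have /shapes_neq0 := Ssh _ S0; apply/negP; rewrite negbK.
    apply/eqP/fsetP => c; rewrite inE; apply/imfsetP => -[x]; by rewrite inE.
move=> X; rewrite inE => /Ssh/shapesP[t [tR tX]].
exists t; split.
  by move=> c ct; apply: (fsubsetP tR); rewrite mem_tshape.
by move=> x; rewrite -mem_fv tX mem_tshape.
Qed.

Lemma bridge R : ntilings R = #|` G R|.
Proof.
rewrite /ntilings.
set A := [set T : {set {set R}} | `[< is_tiling T >]].
have <- : [fset fvT T | T in A] = G R.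
  apply/fsetP => S; apply/imfsetP/idP => [[T]|/G_tiling[T tT <-]].
    by rewrite inE => /asboolP tT ->; exact: fvT_tiling.
  by exists T; rewrite // inE; apply/asboolP.
rewrite card_imfset; last exact: fvT_inj.
by rewrite -card_finset card_imfset.
Qed.

Lemma shapes_D R X Y : Y \in shapes R -> (forall c, c \in Y -> c \notin X) ->
  Y \in shapes (R `\` X).
Proof.
case/shapesP => t [tR ->] dis; apply/shapesP; exists t; split => //.
apply/fsubsetP => c ct; rewrite inE dis ?(fsubsetP tR) //.
Qed.

Lemma shapes_mono R1 R2 Y : R1 `<=` R2 -> Y \in shapes R1 -> Y \in shapes R2.
Proof.
move=> s /shapesP[t [tR ->]]; apply/shapesP; exists t; split => //.
exact: fsubset_trans s.
Qed.

Lemma notin_GD R X S : X \in shapes R -> S \in G (R `\` X) -> X \notin S.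
Proof.
move=> XR; rewrite GP => /andP[/fsubsetP Ssh _]; apply/negP => /Ssh XD.
have /fsubsetP sub := shapes_sub XD; have := shapes_neq0 XR.
case: (fset_0Vmem X) => [-> |[c cX]]; first by rewrite eqxx.
by have := sub c cX; rewrite inE cX.
Qed.

Definition GwX R X := [fset S in G R | X \in S].

Lemma GX R X : X \in shapes R ->
  GwX R X = [fset X |` S' | S' in G (R `\` X)].
Proof.
move=> XR; rewrite /GwX; apply/fsetP => S; apply/idP/imfsetP => [|[S' S'G ->]].
  rewrite inE => /andP[]; rewrite GP => /andP[/fsubsetP Ssh /asboolP[covS disS]] XS.
  exists (S `\ X); last by rewrite fsetD1K.
  rewrite GP; apply/andP; split.
    apply/fsubsetP => Y; rewrite in_fsetD1 => /andP[YX YS]; apply: shapes_D; first exact: Ssh.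
    move=> c cY; apply/negP => cX; move/negP: YX; apply.
    by rewrite (disS c Y X YS XS cY cX).
  apply/asboolP; split.
    move=> c; rewrite inE => /andP[cX cR]; have [Y YS cY] := covS c cR.
    exists Y => //; rewrite in_fsetD1 YS andbT; apply/negP => /eqP YX.
    by rewrite -YX cY in cX.
  by move=> c Y Z; rewrite !inE => /andP[_ ?] /andP[_ ?]; apply: disS.
have XnS := notin_GD XR S'G.
move: S'G; rewrite GP => /andP[/fsubsetP Ssh /asboolP[covS disS]].
rewrite inE /=; apply/andP; split; last by rewrite fsetU11.
change (X |` S' \in G R); rewrite GP; apply/andP; split.
  apply/fsubsetP => Y; rewrite in_fset1U => /orP[/eqP -> //|/Ssh].
  by apply: shapes_mono; exact: fsubsetDl.
have Yout Y c : Y \in S' -> c \in Y -> c \notin X.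
  move=> /Ssh /shapes_sub /fsubsetP sub /sub; by rewrite in_fsetD => /andP[].
apply/asboolP; split.
  move=> c cR; case cX: (c \in X); first by exists X; rewrite ?fsetU11.
  have [|Y YS cY] := covS c; first by rewrite in_fsetD cX cR.
  by exists Y; rewrite // in_fset1U YS orbT.
move=> c Y Z; rewrite !in_fset1U => /orP[/eqP->|YS] /orP[/eqP->|ZS] // cY cZ.
- by have := Yout _ _ ZS cZ; rewrite cY.
- by have := Yout _ _ YS cY; rewrite cZ.
- exact: (disS c).
Qed.

Lemma size_enum_fset (T : choiceType) (A : {fset T}) : size (enum_finmem (mem A)) = #|` A|.
Proof. by rewrite -(@card_imfset imfset_key _ _ id) // imfset_id. Qed.

Lemma card_GX R X : X \in shapes R ->
  #|` GwX R X| = #|` G (R `\` X)|.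
Proof.
move=> XR; rewrite GX // card_in_imfset /=.
  by rewrite size_enum_fset.
move=> S1 S2 S1G S2G E; apply/fsetP => Y.
have := notin_GD XR S1G; have := notin_GD XR S2G.
case: (Y =P X) => [-> /negbTE -> /negbTE -> //|/eqP YX _ _].
by move/fsetP/(_ Y): E; rewrite !inE (negbTE YX).
Qed.

Lemma memGX R X S : (S \in GwX R X) = (S \in G R) && (X \in S).
Proof. by rewrite /GwX inE. Qed.
Lemma cover_c R c S : c \in R -> S \in G R -> exists2 Y, Y \in S & c \in Y.
Proof. by move=> cR; rewrite GP => /andP[_ /asboolP[cov _]]; exact: cov. Qed.

Lemma split_one R c X : c \in R -> X \in shapes R ->
  (forall Y, Y \in shapes R -> c \in Y -> Y = X) ->
  #|` G R| = #|` G (R `\` X)|.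
Proof.
move=> cR XR uniqX; rewrite -card_GX //; congr #|` _|.
apply/fsetP => S; rewrite memGX; case SG: (S \in G R); rewrite ?andbF ?andbT //.
have [Y YS cY] := cover_c cR SG.
move: SG; rewrite GP => /andP[/fsubsetP Ssh _].
by rewrite -(uniqX Y (Ssh _ YS) cY).
Qed.

Lemma split_two R c X1 X2 : c \in R -> X1 \in shapes R -> X2 \in shapes R ->
  c \in X1 -> c \in X2 -> X1 != X2 ->
  (forall Y, Y \in shapes R -> c \in Y -> Y = X1 \/ Y = X2) ->
  #|` G R| = (#|` G (R `\` X1)| + #|` G (R `\` X2)|)%N.
Proof.
move=> cR X1R X2R cX1 cX2 ne uniqX.
rewrite -(card_GX X1R) -(card_GX X2R).
rewrite -cardfsUI.
have -> : GwX R X1 `&` GwX R X2 = fset0.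
  apply/fsetP => S.
 rewrite in_fsetI.
 rewrite (memGX R X1 S) (memGX R X2 S).
 rewrite in_fset0.
  apply/negP => /andP[/andP[SG X1S] /andP[_ X2S]].
  move: SG; rewrite GP => /andP[_ /asboolP[_ dis]].
  by move: ne; rewrite (dis c X1 X2 X1S X2S cX1 cX2) eqxx.
rewrite cardfs0 addn0; congr #|` _|.
apply/fsetP => S.
 rewrite in_fsetU.
 rewrite (memGX R X1 S) (memGX R X2 S).
 case SG: (S \in G R); rewrite ?andbF //.
have [Y YS cY] := cover_c cR SG.
move: SG; rewrite GP => /andP[/fsubsetP Ssh _].
by case: (uniqX Y (Ssh _ YS) cY) => E; rewrite -E YS /= ?orbT.
Qed.
Lemma shapes0 : shapes fset0 = fset0.
Proof.
apply/fsetP => X; rewrite in_fset0; apply/negP => /shapesP[t [tR _]].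
by have := fsubsetP tR _ (head_in t); rewrite in_fset0.
Qed.

Lemma G0 : #|` G fset0| = 1%N.
Proof.
have -> : G fset0 = [fset fset0].
  apply/fsetP => S; rewrite GP shapes0 fsubset0 in_fset1.
  case: eqP => [-> |//]; rewrite /=; apply/asboolP; split => [c|c X Y].
    by rewrite in_fset0.
  by rewrite in_fset0.
by rewrite cardfs1.
Qed.


Definition inQ (p q : nat) (a b : int) (u : bool) : bool :=
  ((b == 0) && (0 <= 2 * a + (if u then 0 else 1)) && (2 * a + (if u then 0 else 1) < p%:Z))
  || ((b == 1) && (0 <= 2 * a + (if u then 1 else 2)) && (2 * a + (if u then 1 else 2) < q%:Z)).

Lemma mem_rowA (m : nat) (b0 : int) (u0 : bool) a b u :
  ((a, b, u) \in [seq ((i%:Z)%R, b0, u0) | i <- iota 0 m]) =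
  [&& b == b0, u == u0, 0 <= a & a < m%:Z].
Proof.
apply/mapP/idP => [[i]|/and4P[/eqP-> /eqP-> a0 am]].
  by rewrite mem_iota => /andP[_ im] [-> -> ->]; rewrite !eqxx /=; lia.
by exists `|a|%N; [rewrite mem_iota; lia | congr (_, _, _); lia].
Qed.

Lemma mem_rowB (m : nat) (b0 : int) (u0 : bool) a b u :
  ((a, b, u) \in [seq ((i%:Z - 1)%R, b0, u0) | i <- iota 0 m]) =
  [&& b == b0, u == u0, -1 <= a & a < m%:Z - 1].
Proof.
apply/mapP/idP => [[i]|/and4P[/eqP-> /eqP-> a0 am]].
  by rewrite mem_iota => /andP[_ im] [-> -> ->]; rewrite !eqxx /=; lia.
by exists (absz (a + 1)); [rewrite mem_iota; lia | congr (_, _, _); lia].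
Qed.

Lemma memHP n a b u : ((a, b, u) \in Hreg n) = inQ (2 * n - 1) (2 * n - 1) a b u.
Proof.
rewrite /Hreg in_fset /= /Hcells !mem_cat !mem_rowA mem_rowB /inQ.
by case: u => /=; lia.
Qed.

Definition Q (p q : nat) : {fset cell} :=
  [fset c in Hreg (p + q) | inQ p q c.1.1 c.1.2 c.2].

Lemma memQ p q a b u : ((a, b, u) \in Q p q) = inQ p q a b u.
Proof.
rewrite /Q inE /= inE /=.
have -> : ((a, b, u) \in [eta mem_seq (Hreg (p + q))]) = ((a, b, u) \in Hreg (p + q)) by [].
by rewrite memHP /inQ; case: u => /=; lia.
Qed.

Lemma Hreg_Q n : Hreg n = Q (2 * n - 1) (2 * n - 1).
Proof. by apply/fsetP => -[[a b] u]; rewrite memQ memHP. Qed.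

Lemma Preg_Q n : (1 <= n)%N -> Preg n = Q (2 * n - 2) (2 * n - 1).
Proof.
move=> n1; apply/fsetP => -[[a b] u]; rewrite memQ /Preg in_fsetD1 memHP /inQ !xpair_eqE.
by case: u => /=; lia.
Qed.


Lemma sub_S R c : tshape (Small c) `<=` R -> c \in R.
Proof. by move/fsubsetP; apply; rewrite mem_tshape inE. Qed.
Lemma sub_LU R a b : tshape (LargeUp a b) `<=` R ->
  [&& (a, b, true) \in R, (a + 1, b, true) \in R, (a, b + 1, true) \in R & (a, b, false) \in R].
Proof. by move/fsubsetP => s; rewrite !s // mem_tshape !inE eqxx ?orbT. Qed.
Lemma sub_LD R a b : tshape (LargeDown a b) `<=` R ->
  [&& (a + 1, b, false) \in R, (a, b + 1, false) \in R, (a + 1, b + 1, false) \in R & (a + 1, b + 1, true) \in R].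
Proof. by move/fsubsetP => s; rewrite !s // mem_tshape !inE eqxx ?orbT. Qed.

Ltac mem_norm := rewrite ?in_fsetD ?mem_tshape /= ?in_cons ?in_nil ?xpair_eqE ?memQ /inQ /=.

Lemma in_shapes R t : (forall x, x \in tile_cells t -> x \in R) -> tshape t \in shapes R.
Proof.
move=> h; apply/shapesP; exists t; split => //; apply/fsubsetP => x.
by rewrite mem_tshape; exact: h.
Qed.

Definition f p q := #|` G (Q p q)|.

Lemma stepA_R2 k : Q (2 * k.+2 - 1) (2 * k.+2 - 1) `\` tshape (LargeUp k%:Z 0) =
  (k%:Z, 1, false) |` Q (2 * k.+1 - 2) (2 * k.+1 - 1).
Proof. apply/fsetP => -[[a b] u]; rewrite in_fset1U; mem_norm; case: u => /=; lia. Qed.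

Lemma stepA k : f (2 * k.+2 - 1) (2 * k.+2 - 1) =
  (f (2 * k.+2 - 2) (2 * k.+2 - 1) + f (2 * k.+1 - 2) (2 * k.+1 - 1))%N.
Proof.
rewrite /f.
set c : cell := (k%:Z + 1, 0, true).
rewrite (@split_two _ c (tshape (Small c)) (tshape (LargeUp k%:Z 0))).
- congr addn.
    congr #|` G _|; apply/fsetP => -[[a b] u]; mem_norm; case: u => /=; lia.
  rewrite stepA_R2.
  set d : cell := (k%:Z, 1, false).
  rewrite (@split_one _ d (tshape (Small d))).
  + congr #|` G _|; apply/fsetP => -[[a b] u]; rewrite /d in_fsetD in_fset1U; mem_norm; case: u => /=; lia.
  + by rewrite in_fset1U eqxx.
  + apply: in_shapes => -[[a b] u]; rewrite /d inE => /eqP ->; by rewrite in_fset1U eqxx.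
  + move=> Y /shapesP[t [tR ->]]; rewrite mem_tshape.
    case: t tR => [[[a' b'] u']|a' b'|a' b'] tR.
    * by rewrite inE => /eqP ->.
    * move: (sub_LU tR); rewrite /d !in_fset1U; mem_norm; lia.
    * move: (sub_LD tR); rewrite /d !in_fset1U; mem_norm; lia.
- rewrite /c; mem_norm; lia.
- apply: in_shapes => -[[a b] u]; rewrite /c; mem_norm; case: u => /=; lia.
- apply: in_shapes => -[[a b] u]; rewrite /c; mem_norm; case: u => /=; lia.
- by rewrite mem_tshape inE.
- rewrite /c; mem_norm; lia.
- apply/eqP => /fsetP/(_ (k%:Z, 0, true)); rewrite /c; mem_norm; lia.
- move=> Y /shapesP[t [tR ->]]; rewrite mem_tshape.
  case: t tR => [[[a' b'] u']|a' b'|a' b'] tR.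
  + by rewrite inE => /eqP ->; left.
  + move: (sub_LU tR); rewrite /c; mem_norm => h1 h2.
    have [-> ->] : a' = k%:Z /\ b' = 0 by lia.
    by right.
  + move: (sub_LD tR); rewrite /c; mem_norm; lia.
Qed.

Lemma stepB k : f (2 * k.+2 - 2) (2 * k.+2 - 1) =
  (f (2 * k.+1) (2 * k.+1) + f (2 * k.+1 - 1) (2 * k.+1 - 2))%N.
Proof.
rewrite /f.
set c : cell := (k%:Z, 1, false).
rewrite (@split_two _ c (tshape (Small c)) (tshape (LargeDown (k%:Z - 1) 0))).
- congr addn; congr #|` G _|; apply/fsetP => -[[a b] u]; mem_norm; case: u => /=; lia.
- rewrite /c; mem_norm; lia.
- apply: in_shapes => -[[a b] u]; rewrite /c; mem_norm; case: u => /=; lia.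
- apply: in_shapes => -[[a b] u]; rewrite /c; mem_norm; case: u => /=; lia.
- by rewrite mem_tshape inE.
- rewrite /c; mem_norm; lia.
- apply/eqP => /fsetP/(_ (k%:Z, 0, false)); rewrite /c; mem_norm; lia.
- move=> Y /shapesP[t [tR ->]]; rewrite mem_tshape.
  case: t tR => [[[a' b'] u']|a' b'|a' b'] tR.
  + by rewrite inE => /eqP ->; left.
  + move: (sub_LU tR); rewrite /c; mem_norm; lia.
  + move: (sub_LD tR); rewrite /c; mem_norm => h1 h2.
    have [-> ->] : a' = k%:Z - 1 /\ b' = 0 by lia.
    by right.
Qed.

Lemma stepC k : f (2 * k.+1) (2 * k.+1) = f (2 * k.+1) (2 * k.+1 - 1).
Proof.
rewrite /f.
set c : cell := (k%:Z, 1, true).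
rewrite (@split_one _ c (tshape (Small c))).
- congr #|` G _|; apply/fsetP => -[[a b] u]; mem_norm; case: u => /=; lia.
- rewrite /c; mem_norm; lia.
- apply: in_shapes => -[[a b] u]; rewrite /c; mem_norm; case: u => /=; lia.
- move=> Y /shapesP[t [tR ->]]; rewrite mem_tshape.
  case: t tR => [[[a' b'] u']|a' b'|a' b'] tR.
  + by rewrite inE => /eqP ->.
  + move: (sub_LU tR); rewrite /c; mem_norm; lia.
  + move: (sub_LD tR); rewrite /c; mem_norm; lia.
Qed.

Lemma stepD k : f (2 * k.+1) (2 * k.+1 - 1) = f (2 * k.+1 - 1) (2 * k.+1 - 1).
Proof.
rewrite /f.
set c : cell := (k%:Z, 0, false).
rewrite (@split_one _ c (tshape (Small c))).
- congr #|` G _|; apply/fsetP => -[[a b] u]; mem_norm; case: u => /=; lia.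
- rewrite /c; mem_norm; lia.
- apply: in_shapes => -[[a b] u]; rewrite /c; mem_norm; case: u => /=; lia.
- move=> Y /shapesP[t [tR ->]]; rewrite mem_tshape.
  case: t tR => [[[a' b'] u']|a' b'|a' b'] tR.
  + by rewrite inE => /eqP ->.
  + move: (sub_LU tR); rewrite /c; mem_norm; lia.
  + move: (sub_LD tR); rewrite /c; mem_norm; lia.
Qed.

Lemma stepE k : f (2 * k.+2 - 1) (2 * k.+2 - 2) =
  (f (2 * k.+1) (2 * k.+1) + f (2 * k.+1 - 2) (2 * k.+1 - 1))%N.
Proof.
rewrite /f.
set c : cell := (k%:Z + 1, 0, true).
rewrite (@split_two _ c (tshape (Small c)) (tshape (LargeUp k%:Z 0))).
- congr addn; congr #|` G _|; apply/fsetP => -[[a b] u]; mem_norm; case: u => /=; lia.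
- rewrite /c; mem_norm; lia.
- apply: in_shapes => -[[a b] u]; rewrite /c; mem_norm; case: u => /=; lia.
- apply: in_shapes => -[[a b] u]; rewrite /c; mem_norm; case: u => /=; lia.
- by rewrite mem_tshape inE.
- rewrite /c; mem_norm; lia.
- apply/eqP => /fsetP/(_ (k%:Z, 0, true)); rewrite /c; mem_norm; lia.
- move=> Y /shapesP[t [tR ->]]; rewrite mem_tshape.
  case: t tR => [[[a' b'] u']|a' b'|a' b'] tR.
  + by rewrite inE => /eqP ->; left.
  + move: (sub_LU tR); rewrite /c; mem_norm => h1 h2.
    have [-> ->] : a' = k%:Z /\ b' = 0 by lia.
    by right.
  + move: (sub_LD tR); rewrite /c; mem_norm; lia.
Qed.

Lemma Q00 : Q 0 0 = fset0.
Proof. by apply/fsetP => -[[a b] u]; rewrite in_fset0 memQ /inQ; case: u => /=; lia. Qed.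

Lemma base_one p q c : (p + q = 1)%N -> c \in Q p q ->
  (forall t, tshape t `<=` Q p q -> c \in tile_cells t -> t = Small c) ->
  f p q = 1%N.
Proof.
move=> pq cQ uniq; rewrite /f (@split_one _ c (tshape (Small c))) //.
- have -> : Q p q `\` tshape (Small c) = fset0.
    apply/fsetP => -[[a b] u]; rewrite in_fset0 in_fsetD mem_tshape /= in_cons in_nil orbF.
    move: cQ; case: c {uniq} => -[a0 b0] u0; rewrite !memQ /inQ !xpair_eqE.
    by case: u; case: u0 => /=; lia.
  by rewrite G0.
- by apply: in_shapes => x; rewrite inE => /eqP ->.
- by move=> Y /shapesP[t [tR ->]]; rewrite mem_tshape => /(uniq _ tR) ->.
Qed.


Lemma f10 : f 1 0 = 1%N.
Proof. apply: (@base_one _ _ (0, 0, true)) => //; first by rewrite memQ. move=> t tR; case: t tR => [[[a' b'] u']|a' b'|a' b'] tR;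
  [ by rewrite inE => /eqP -> | move: (sub_LU tR); mem_norm; lia | move: (sub_LD tR); mem_norm; lia]. Qed.
Lemma f01 : f 0 1 = 1%N.
Proof. apply: (@base_one _ _ (-1, 1, false)) => //; first by rewrite memQ. move=> t tR; case: t tR => [[[a' b'] u']|a' b'|a' b'] tR;
  [ by rewrite inE => /eqP -> | move: (sub_LU tR); mem_norm; lia | move: (sub_LD tR); mem_norm; lia]. Qed.
Lemma f11 : f 1 1 = 1%N.
Proof.
have -> : f 1 1 = f 0 1; last exact: f01.
rewrite /f.
set c : cell := (0, 0, true).
rewrite (@split_one _ c (tshape (Small c))).
- congr #|` G _|; apply/fsetP => -[[a b] u]; mem_norm; case: u => /=; lia.
- rewrite /c; mem_norm; lia.
- apply: in_shapes => -[[a b] u]; rewrite /c; mem_norm; case: u => /=; lia.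
- move=> Y /shapesP[t [tR ->]]; rewrite mem_tshape.
  case: t tR => [[[a' b'] u']|a' b'|a' b'] tR.
  + by rewrite inE => /eqP ->.
  + move: (sub_LU tR); rewrite /c; mem_norm; lia.
  + move: (sub_LD tR); rewrite /c; mem_norm; lia.
Qed.

Lemma closed_form (R : rcfType) (H P : nat -> nat) :
  H 1%N = 1%N -> P 1%N = 1%N ->
  (forall k, H k.+2 = (H k.+1 + 2 * P k.+1)%N /\ P k.+2 = (H k.+1 + P k.+1)%N) ->
  forall n, (1 <= n)%N ->
     (P n)%:R = ((1 + Num.sqrt 2) ^+ n - (1 - Num.sqrt 2) ^+ n)
                   / (2 * Num.sqrt 2) :> R /\
     (H n)%:R = ((1 + Num.sqrt 2) ^+ n + (1 - Num.sqrt 2) ^+ n) / 2 :> R.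
Proof.
move=> H1 P1 rec n; case: n => // n _.
have s2 : Num.sqrt (2 : R) * Num.sqrt 2 = 2.
  by rewrite -expr2 sqr_sqrtr // ler0n.
have s0 : Num.sqrt (2 : R) != 0 by rewrite sqrtr_eq0 -ltNge ltr0n.
set s := Num.sqrt (2 : R) in s2 s0 *.
have t0 : (2 : R) != 0 by rewrite pnatr_eq0.
elim: n => [|k [IHP IHH]].
  rewrite P1 H1 !expr1; split; field; by rewrite ?s0 ?t0.
have [-> ->] := rec k.
rewrite !natrD addr0 IHP IHH !exprS.
set x := (1 + s) ^+ k.+1; set y := (1 - s) ^+ k.+1.
split.
  field. exact: s0.
have e z : z / (2 * s) = z * s / (2 * (s * s)).
  field. exact: s0.
rewrite s2 in e; rewrite !e. field. done.
Qed.


Lemma HnE n : Hn n = f (2 * n - 1) (2 * n - 1).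
Proof. by rewrite /Hn bridge Hreg_Q. Qed.
Lemma PnE n : (1 <= n)%N -> Pn n = f (2 * n - 2) (2 * n - 1).
Proof. by move=> n1; rewrite /Pn bridge Preg_Q. Qed.
Definition g k := f (2 * k - 1) (2 * k - 2).

Lemma P_rec_g k : Pn k.+2 = (Hn k.+1 + g k.+1)%N.
Proof. by rewrite PnE // stepB stepC stepD HnE. Qed.
Lemma g_rec k : g k.+2 = (Hn k.+1 + Pn k.+1)%N.
Proof. by rewrite /g stepE stepC stepD HnE PnE. Qed.
Lemma H_rec k : Hn k.+2 = (Pn k.+2 + Pn k.+1)%N.
Proof. by rewrite HnE stepA !PnE. Qed.

Lemma gP k : g k.+1 = Pn k.+1.
Proof.
elim: k => [|k IH].
  by rewrite PnE //; have := f10; have := f01; rewrite /g /= => -> ->.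
by rewrite g_rec P_rec_g IH.
Qed.

Lemma recs k : Hn k.+2 = (Hn k.+1 + 2 * Pn k.+1)%N /\ Pn k.+2 = (Hn k.+1 + Pn k.+1)%N.
Proof.
have eP : Pn k.+2 = (Hn k.+1 + Pn k.+1)%N by rewrite P_rec_g gP.
by split => //; rewrite H_rec eP; lia.
Qed.

Lemma H1 : Hn 1 = 1%N.
Proof. by rewrite HnE; exact: f11. Qed.
Lemma P1 : Pn 1 = 1%N.
Proof. by rewrite PnE //; exact: f01. Qed.

Theorem theorem1 :
  (Hn 1 = 1%N /\ Hn 2 = 3%N /\ Pn 1 = 1%N /\ Pn 2 = 2%N) /\
  (forall n : nat, (2 <= n)%N ->
     Hn n = (Hn n.-1 + 2 * Pn n.-1)%N /\ Pn n = (Hn n.-1 + Pn n.-1)%N) /\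
  (forall n : nat, (3 <= n)%N ->
     Hn n = (2 * Hn n.-1 + Hn n.-2)%N /\ Pn n = (2 * Pn n.-1 + Pn n.-2)%N) /\
  (forall (R : rcfType) (n : nat), (1 <= n)%N ->
     (Pn n)%:R = ((1 + Num.sqrt 2) ^+ n - (1 - Num.sqrt 2) ^+ n)
                   / (2 * Num.sqrt 2) :> R /\
     (Hn n)%:R = ((1 + Num.sqrt 2) ^+ n + (1 - Num.sqrt 2) ^+ n) / 2 :> R).
Proof.
split.
  have [h2 p2] := recs 0.
  by rewrite h2 p2 H1 P1.
split.
  by case=> [|[|k]] // _; exact: recs.
split.
  case=> [|[|[|k]]] // _ /=.
  have [ha pa] := recs k.+1; have [hb pb] := recs k.
  by rewrite ha pa hb pb; lia.
move=> R n n1; apply: closed_form => //; [exact: H1 | exact: P1 | exact: recs].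
Qed.
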